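(* Let $M\in\mathcal{G}$ be such that $C_M$ and $C_{M^{-1}}$ are invertible, and set $Z_M=C_M^{-1}D_M$, $Z_{M^{-1}}=C_{M^{-1}}^{-1}D_{M^{-1}}$. Then $$Z_M=(\mathbb{1}+\Delta_{M^{-1}})^{-1}(\mathbb{1}-\Delta_{M^{-1}}),\qquad Z_MJ=-JZ_M,\qquad M=C_M(\mathbb{1}+Z_M),$$ $$\mathbb{1}=C_{M^{-1}}C_M(\mathbb{1}-Z_M^2),\qquad Z_{M^{-1}}C_M=-C_MZ_M,$$ where $\Delta_{M}=-MJM^{-1}J$.
   Context: Either bosonic case ($\mathcal{G}=\mathrm{Sp}(2N,\mathbb{R})$ preserving $\Omega=\begin{pmatrix}0&\mathbb{1}\\-\mathbb{1}&0\end{pmatrix}$, $J^2=-\mathbb{1}$, $J\Omega J^\intercal=\Omega$, $-J\Omega>0$) or fermionic case ($\mathcal{G}=\mathrm{SO}(2N,\mathbb{R})$, $J$ orthogonal with $J^2=-\mathbb{1}$). For a real linear map $M$ of $\mathbb{R}^{2N}$: $C_M=\frac12(M-JMJ)$ (the part commuting with $J$) and $D_M=\frac12(M+JMJ)$ (the part anticommuting with $J$). *)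

(* Defs.v *)
From HB Require Import structures.
From mathcomp Require Import all_boot all_order all_algebra.
Set Implicit Arguments. Unset Strict Implicit. Unset Printing Implicit Defensive.
Import Order.TTheory GRing.Theory Num.Theory.
Local Open Scope ring_scope.

Section Defs.
Variable R : realFieldType.
Variable N : nat.
Local Notation Mat := 'M[R]_(N + N).

Definition Omega : Mat := block_mx 0 1%:M (- 1%:M) 0.

(* commuting / anticommuting parts w.r.t. J *)
Definition CM (J M : Mat) : Mat := 2%:R^-1 *: (M - J *m M *m J).
Definition DM (J M : Mat) : Mat := 2%:R^-1 *: (M + J *m M *m J).
Definition ZM (J M : Mat) : Mat := invmx (CM J M) *m DM J M.
Definition DeltaM (J M : Mat) : Mat := - (M *m J *m invmx M *m J).

Definition posdef (A : Mat) : Prop :=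
  forall x : 'cV[R]_(N + N), x != 0 -> 0 < ((x^T *m A *m x) 0 0).

(* bosonic setting: J a compatible complex structure, M in Sp(2N,R) *)
Definition bosonic (J M : Mat) : Prop :=
  [/\ J *m J = - 1%:M, J *m Omega *m J^T = Omega, posdef (- (J *m Omega)),
      M \in unitmx & M *m Omega *m M^T = Omega].

(* fermionic setting: J orthogonal complex structure, M in SO(2N,R) *)
Definition fermionic (J M : Mat) : Prop :=
  [/\ J *m J = - 1%:M, J *m J^T = 1%:M, M *m M^T = 1%:M & \det M = 1].

End Defs.

(* Main.v *)
Require Import Defs.
From HB Require Import structures.
From mathcomp Require Import all_boot all_order all_algebra.
Import Order.TTheory GRing.Theory Num.Theory.
Local Open Scope ring_scope.

Section S.
Variable R : realFieldType.
Variable N : nat.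
Variable J : 'M[R]_(N + N).
Hypothesis HJ : J *m J = - 1%:M.

Lemma JJX (X : 'M[R]_(N + N)) : J *m (J *m X) = - X.
Proof. by rewrite mulmxA HJ mulNmx mul1mx. Qed.
Lemma XJJ (X : 'M[R]_(N + N)) : X *m J *m J = - X.
Proof. by rewrite -mulmxA HJ mulmxN mulmx1. Qed.


Lemma commC X : J *m CM J X = CM J X *m J.
Proof.
rewrite /CM -scalemxAl -scalemxAr; congr (_ *: _).
rewrite mulmxBr mulmxBl -!mulmxA JJX !mulmxA XJJ !opprK.
by rewrite addrC.
Qed.

Lemma antiD X : J *m DM J X = - (DM J X *m J).
Proof.
rewrite /DM -scalemxAl -scalemxAr -scalerN; congr (_ *: _).
rewrite mulmxDr mulmxDl -!mulmxA JJX !mulmxA XJJ.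
by rewrite opprB.
Qed.

Lemma sumCD X : CM J X + DM J X = X.
Proof.
rewrite /CM /DM -scalerDr addrACA addNr addr0 -mulr2n -scaler_nat scalerA.
by rewrite mulVf ?scale1r // pnatr_eq0.
Qed.

Lemma two_eq0 (Y : 'M[R]_(N + N)) : Y + Y = 0 -> Y = 0.
Proof.
move=> h; have : 2%:R^-1 *: (Y + Y) = 0 by rewrite h scaler0.
by rewrite -mulr2n -scaler_nat scalerA mulVf ?scale1r // pnatr_eq0.
Qed.

End S.

Lemma mainlem (R : realFieldType) N (J M : 'M[R]_(N + N)) :
  J *m J = - 1%:M -> M \in unitmx ->
  CM J M \in unitmx -> CM J (invmx M) \in unitmx ->
  let ZM_ := ZM J M in
  let ZMi := ZM J (invmx M) in
  let Dl := DeltaM J (invmx M) in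
  [/\ (1%:M + Dl) \in unitmx /\ ZM_ = invmx (1%:M + Dl) *m (1%:M - Dl),
      ZM_ *m J = - (J *m ZM_),
      M = CM J M *m (1%:M + ZM_),
      1%:M = CM J (invmx M) *m CM J M *m (1%:M - ZM_ *m ZM_)
    & ZMi *m CM J M = - (CM J M *m ZM_)].
Proof.
move=> HJ HM HC HC' ZM_ ZMi Dl.
have JJX := @JJX _ _ _ HJ; have XJJ := @XJJ _ _ _ HJ.
have hM := @sumCD _ _ J M; have hMi := @sumCD _ _ J (invmx M).
set C := CM J M in HC hM *; set D := DM J M in hM *.
set C' := CM J (invmx M) in HC' hMi *; set D' := DM J (invmx M) in hMi *.
have cC : J *m C = C *m J := @commC _ _ _ HJ M.
have cC' : J *m C' = C' *m J := @commC _ _ _ HJ (invmx M).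
have aD : J *m D = - (D *m J) := @antiD _ _ _ HJ M.
have aD' : J *m D' = - (D' *m J) := @antiD _ _ _ HJ (invmx M).
set X := C' *m C + D' *m D.
set Y := C' *m D + D' *m C.
have hXY : X + Y = 1%:M.
  by rewrite -(mulVmx HM) -hMi -hM mulmxDl !mulmxDr /X /Y addrACA (addrC (D' *m D)).
have cX : J *m X = X *m J.
  by rewrite /X mulmxDr mulmxDl !mulmxA cC' aD' -!mulmxA cC mulNmx -mulmxA aD mulmxN opprK.
have aY : J *m Y = - (Y *m J).
  rewrite /Y mulmxDr mulmxDl !mulmxA cC' aD' -!mulmxA aD mulNmx -mulmxA cC mulmxN.
  by rewrite opprD.
have hY : Y = 0.
  apply: two_eq0.
  have e1 : J *m (X + Y) *m J = - X + Y.
    by rewrite mulmxDr mulmxDl cX aY mulNmx !XJJ opprK.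
  rewrite hXY mulmx1 HJ in e1.
  have -> : Y + Y = (X + Y) + (- X + Y) by rewrite [RHS]addrACA subrr add0r.
  by rewrite -e1 hXY; apply: subrr.
have hX : X = 1%:M by rewrite -hXY hY addr0.
have hDC : D' *m C = - (C' *m D).
  by apply/eqP; rewrite -addr_eq0 addrC -/Y hY.
have hZ : ZM_ = invmx C *m D by [].
have hZi : ZMi = invmx C' *m D' by [].
have ciC : invmx C *m J = J *m invmx C.
  by rewrite -[LHS](mulmxK HC) -(mulmxA (invmx C)) cC mulmxA (mulVmx HC) mul1mx.
have two0 : (2%:R : R) != 0 by rewrite pnatr_eq0.
have hP : M - J *m M *m J = 2%:R *: C.
  by rewrite /C /CM scalerA divff // scale1r.
have hQ : M + J *m M *m J = 2%:R *: D.
  by rewrite /D /DM scalerA divff // scale1r.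
have hDl : Dl = - (invmx M *m J *m M *m J) by rewrite /Dl /DeltaM invmxK.
have h1 : 1%:M + Dl = invmx M *m (2%:R *: C).
  by rewrite -hP mulmxBr (mulVmx HM) !mulmxA hDl.
have h2 : 1%:M - Dl = invmx M *m (2%:R *: D).
  by rewrite -hQ mulmxDr (mulVmx HM) !mulmxA hDl opprK.
have hU : 1%:M + Dl \in unitmx.
  by rewrite h1 unitmx_mul unitmx_inv HM unitmxZ ?HC // unitfE.
split.
- split => //.
  have e : (1%:M + Dl) *m ZM_ = 1%:M - Dl.
    by rewrite h1 h2 hZ -mulmxA -scalemxAl mulKVmx.
  by rewrite -e mulKmx.
- rewrite hZ -mulmxA -[D *m J]opprK -aD mulmxN mulmxA ciC.
  by rewrite !mulmxA.
- by rewrite hZ mulmxDr mulmx1 mulKVmx // hM.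
- have hDD : D' *m D = - (C' *m D *m invmx C *m D).
    by rewrite -{1}(mulKVmx HC D) (mulmxA D') hDC mulNmx !mulmxA.
  by rewrite -{1}hX /X hDD mulmxBr mulmx1 hZ !mulmxA (mulmxK HC).
- by rewrite hZi hZ -mulmxA hDC mulmxN mulKmx // mulKVmx.
Qed.


Theorem lemma2 (R : realFieldType) (N : nat) (J M : 'M[R]_(N + N)) :
  (bosonic J M \/ fermionic J M) ->
  CM J M \in unitmx -> CM J (invmx M) \in unitmx ->
  let ZM_ := ZM J M in
  let ZMi := ZM J (invmx M) in
  let Dl := DeltaM J (invmx M) in
  [/\ (1%:M + Dl) \in unitmx /\ ZM_ = invmx (1%:M + Dl) *m (1%:M - Dl),
      ZM_ *m J = - (J *m ZM_),
      M = CM J M *m (1%:M + ZM_),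
      1%:M = CM J (invmx M) *m CM J M *m (1%:M - ZM_ *m ZM_)
    & ZMi *m CM J M = - (CM J M *m ZM_)].
Proof.
move=> H HC HC'.
have [HJ HM] : J *m J = - 1%:M /\ M \in unitmx.
  case: H => [[? _ _ ? _]|[? _ HMM _]]; split => //.
  by case: (mulmx1_unit HMM).
exact: mainlem.
Qed.
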